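(* Let $B\colon\mathbf{Set}\to\mathbf{Set}$ be a functor, $\Lambda$ a finite set, and $(\tau_\lambda\colon B[0,1]\to[0,1])_{\lambda\in\Lambda}$ functions such that, for every set $Y$, whenever $k_i\colon Y\to[0,1]$ converges uniformly to $l$, $\tau_\lambda\circ Bk_i$ converges uniformly to $\tau_\lambda\circ Bl$ for each $\lambda$. Let $x\colon X\to BX$ be a coalgebra. Then for each $i\in\mathbb{N}$, the set $S_i=\{[\![\varphi]\!]_x\mid\mathrm{depth}(\varphi)\le i\}\subseteq\mathbf{Set}(X,[0,1])$ is approximating, i.e. for every nonexpansive $h\colon(X,d_{S_i})\to([0,1],d_e)$, every $\lambda\in\Lambda$ and all $z,w\in BX$, $\sup_{k\in S_i,\lambda'\in\Lambda}|\tau_{\lambda'}(Bk(z))-\tau_{\lambda'}(Bk(w))|\ge|\tau_\lambda(Bh(z))-\tau_\lambda(Bh(w))|$, where $d_{S_i}(a,b)=\sup_{k\in S_i}|k(a)-k(b)|$.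
   Context: Formulas: $\varphi::=\top\mid\neg\varphi\mid\min(\varphi_1,\varphi_2)\mid(\ominus q)\varphi\ (q\in\mathbb{Q}\cap[0,1])\mid\heartsuit_\lambda\varphi$. Semantics in $[0,1]$: $[\![\top]\!]=1$, $[\![\neg\varphi]\!]=1-[\![\varphi]\!]$, $[\![\min(\varphi_1,\varphi_2)]\!]=\min$ pointwise, $[\![(\ominus q)\varphi]\!]=\max([\![\varphi]\!]-q,0)$, $[\![\heartsuit_\lambda\varphi]\!]_x=\tau_\lambda\circ B[\![\varphi]\!]_x\circ x$. Depth: $0$ for $\top$, unchanged by $\neg,(\ominus q)$, maximum for $\min$, plus one for $\heartsuit_\lambda$. $d_e$ is the Euclidean metric. *)

(* Defs.v *)
From HB Require Import structures.
From mathcomp Require Import all_boot all_order all_algebra.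
From mathcomp Require Import boolp classical_sets reals.
Set Implicit Arguments. Unset Strict Implicit. Unset Printing Implicit Defensive.
Import Order.TTheory GRing.Theory Num.Theory.
Local Open Scope ring_scope.
Local Open Scope classical_set_scope.

Record functor := Functor {
  Fobj :> Type -> Type;
  Fmap : forall A C : Type, (A -> C) -> Fobj A -> Fobj C;
  Fmap_id : forall A (u : Fobj A), Fmap (fun a : A => a) u = u;
  Fmap_comp : forall A C D (f : A -> C) (g : C -> D) (u : Fobj A),
      Fmap (fun a => g (f a)) u = Fmap g (Fmap f u) }.
Arguments Fmap {_ _ _}.

Section UnitInterval.
Variable R : realType.

Definition I01 := {x : R | (0 <= x <= 1)}.
Definition v01 (x : I01) : R := proj1_sig x.

Lemma one01 : (0 <= (1:R) <= 1). Proof. by rewrite ler01 lexx. Qed.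
Definition top01 : I01 := exist (fun r : R => (0 <= r <= 1)) 1 one01.

Lemma compl01_subproof (x : I01) : (0 <= 1 - v01 x <= 1).
Proof.
case: x => y /= /andP[h0 h1]; apply/andP; split.
  by rewrite subr_ge0.
by rewrite lerBlDr lerDl.
Qed.
Definition compl01 (x : I01) : I01 := exist (fun r : R => (0 <= r <= 1)) (1 - v01 x) (compl01_subproof x).

Lemma min01_subproof (x y : I01) : (0 <= Num.min (v01 x) (v01 y) <= 1).
Proof.
case: x y => [a /andP[a0 a1]] [b /andP[b0 b1]] /=.
by rewrite le_min a0 b0 /= ge_min a1.
Qed.
Definition min01 (x y : I01) : I01 := exist (fun r : R => (0 <= r <= 1)) _ (min01_subproof x y).

Definition Q01 := {q : rat | (0 <= q <= 1)}.

Lemma trunc01_subproof (q : Q01) (x : I01) :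
  (0 <= Num.max (v01 x - ratr (proj1_sig q)) 0 <= 1).
Proof.
case: q x => [q /andP[q0 q1]] [a /andP[a0 a1]] /=.
rewrite le_max lexx orbT /= ge_max ler01 andbT.
rewrite lerBlDr (le_trans a1) // lerDl.
by rewrite ler0q.
Qed.
Definition trunc01 (q : Q01) (x : I01) : I01 := exist (fun r : R => (0 <= r <= 1)) _ (trunc01_subproof q x).

End UnitInterval.

Inductive formula (Lambda : Type) : Type :=
| FTop : formula Lambda
| FNeg : formula Lambda -> formula Lambda
| FMin : formula Lambda -> formula Lambda -> formula Lambda
| FMinus : Q01 -> formula Lambda -> formula Lambda
| FHeart : Lambda -> formula Lambda -> formula Lambda.
Arguments FTop {Lambda}.

Fixpoint depth Lambda (phi : formula Lambda) : nat :=
  match phi with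
  | FTop => 0
  | FNeg p => depth p
  | FMin p q => maxn (depth p) (depth q)
  | FMinus _ p => depth p
  | FHeart _ p => (depth p).+1
  end.

Fixpoint sem (R : realType) (B : functor) (Lambda : Type)
    (tau : Lambda -> B (I01 R) -> I01 R) (X : Type) (x : X -> B X)
    (phi : formula Lambda) : X -> I01 R :=
  match phi with
  | FTop => fun _ => top01 R
  | FNeg p => fun a => compl01 (sem tau x p a)
  | FMin p q => fun a => min01 (sem tau x p a) (sem tau x q a)
  | FMinus r p => fun a => trunc01 r (sem tau x p a)
  | FHeart l p => fun a => tau l (Fmap (sem tau x p) (x a))
  end.

Definition unif_cvg (R : realType) (Y : Type) (f : nat -> Y -> R) (g : Y -> R) :=
  forall e : R, 0 < e -> exists N : nat, forall n, (N <= n)%N ->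
    forall y, `|f n y - g y| < e.

Definition tau_unif_continuous (R : realType) (B : functor) (Lambda : Type)
    (tau : Lambda -> B (I01 R) -> I01 R) :=
  forall (Y : Type) (k : nat -> Y -> I01 R) (l : Y -> I01 R),
    unif_cvg (fun n y => v01 (k n y)) (fun y => v01 (l y)) ->
    forall lam : Lambda,
      unif_cvg (fun n u => v01 (tau lam (Fmap (k n) u)))
               (fun u => v01 (tau lam (Fmap l u))).

Definition dS (R : realType) (X : Type) (S : set (X -> I01 R)) (a b : X) : R :=
  sup [set `|v01 (k a) - v01 (k b)| | k in S].

Definition nonexpansive (R : realType) (X : Type) (S : set (X -> I01 R))
    (h : X -> I01 R) :=
  forall a b : X, `|v01 (h a) - v01 (h b)| <= dS S a b.

Definition approximating (R : realType) (B : functor) (Lambda : Type)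
    (tau : Lambda -> B (I01 R) -> I01 R) (X : Type) (S : set (X -> I01 R)) :=
  forall h : X -> I01 R, nonexpansive S h ->
  forall (lam : Lambda) (z w : B X),
    `|v01 (tau lam (Fmap h z)) - v01 (tau lam (Fmap h w))|
    <= sup [set `|v01 (tau p.2 (Fmap p.1 z)) - v01 (tau p.2 (Fmap p.1 w))|
           | p in [set p : (X -> I01 R) * Lambda | S p.1]].

Definition S_depth (R : realType) (B : functor) (Lambda : Type)
    (tau : Lambda -> B (I01 R) -> I01 R) (X : Type) (x : X -> B X) (i : nat)
    : set (X -> I01 R) :=
  [set f | exists phi : formula Lambda, (depth phi <= i)%N /\ f = sem tau x phi].

(* Main.v *)
Require Import Defs.
From HB Require Import structures.
From mathcomp Require Import all_boot all_order all_algebra.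
From mathcomp Require Import boolp classical_sets reals.
From mathcomp Require Import lra.
Set Implicit Arguments. Unset Strict Implicit. Unset Printing Implicit Defensive.
Import Order.TTheory GRing.Theory Num.Theory.
Local Open Scope ring_scope.

Section Basic.
Variable R : realType.

Ltac split_ifs := repeat match goal with |- context [if ?c then _ else _] =>
  (lazymatch c with context [if _ then _ else _] => fail | _ => idtac end);
  let H := fresh in case H: c end.

Lemma max_neg (u v : R) : 1 - Num.min (1 - u) (1 - v) = Num.max u v.
Proof. rewrite !minElt !maxElt; split_ifs; lra. Qed.

Lemma dist_max (u q : R) : Num.max (Num.max (u - q) 0) (Num.max (1 - u - (1 - q)) 0) = `|u - q|.
Proof.
rewrite !maxElt; case: (leP q u) => h.
  rewrite ger0_norm ?subr_ge0 //; split_ifs; lra.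
rewrite ltr0_norm ?subr_lt0 //; split_ifs; lra.
Qed.

Lemma addc_min (u q : R) : 1 - Num.max (1 - u - q) 0 = Num.min (u + q) 1.
Proof. rewrite !minElt !maxElt; split_ifs; lra. Qed.

Lemma min_dist (a b c d : R) : `|Num.min a b - Num.min c d| <= Num.max `|a - c| `|b - d|.
Proof.
set M := Num.max _ _.
have h1 : `|a - c| <= M by rewrite le_max lexx.
have h2 : `|b - d| <= M by rewrite le_max lexx orbT.
have := ler_norm (a - c); have := ler_norm (b - d).
have := ler_norm (c - a); rewrite distrC => ?.
have := ler_norm (d - b); rewrite distrC => ?.
rewrite ler_norml !minElt; split_ifs => *; apply/andP; split; lra.
Qed.

Lemma trunc_dist (a b q : R) : `|Num.max (a - q) 0 - Num.max (b - q) 0| <= `|a - b|.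
Proof.
rewrite !maxElt; case: (leP b a) => h.
  rewrite (ger0_norm (x := a - b)) ?subr_ge0 // ler_norml; split_ifs; apply/andP; split; lra.
rewrite (ltr0_norm (x := a - b)) ?subr_lt0 // ler_norml; split_ifs; apply/andP; split; lra.
Qed.
End Basic.


Section Forms.
Variable R : realType.
Variable B : functor.
Variable Lambda : finType.
Variable tau : Lambda -> B (I01 R) -> I01 R.
Variable X : Type.
Variable x : X -> B X.

Definition s (phi : formula Lambda) (a : X) : R := v01 (sem tau x phi a).

Lemma s_range phi a : 0 <= s phi a <= 1.
Proof. by rewrite /s; case: (sem tau x phi a). Qed.

Definition FBot : formula Lambda := FNeg FTop.
Definition FMax (p q : formula Lambda) := FNeg (FMin (FNeg p) (FNeg q)).

Lemma compQ_subproof (q : Q01) : (0 <= 1 - sval q <= 1)%R.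
Proof. case: q => q /= /andP[h0 h1]; apply/andP; split; lra. Qed.
Definition compQ (q : Q01) : Q01 := exist (fun r : rat => (0 <= r <= 1)%R) (1 - sval q) (compQ_subproof q).

Definition FDist (p : formula Lambda) q := FMax (FMinus q p) (FMinus (compQ q) (FNeg p)).
Definition FAddC (p : formula Lambda) q := FNeg (FMinus q (FNeg p)).

Lemma gridQ_subproof (N : nat) (t : 'I_N.+1) : (0 <= (t%:R / N%:R : rat) <= 1)%R.
Proof.
apply/andP; split; first by rewrite divr_ge0.
case: N t => [|N] t; first by rewrite invr0 mulr0.
by rewrite ler_pdivrMr ?ltr0n // mul1r ler_nat -ltnS.
Qed.
Definition gridQ N (t : 'I_N.+1) : Q01 := exist (fun q : rat => (0 <= q <= 1)%R) _ (gridQ_subproof t).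

Lemma ratr_gridQ N (t : 'I_N.+1) : ratr (sval (gridQ t)) = t%:R / N%:R :> R.
Proof. by rewrite /= fmorph_div !rmorph_nat. Qed.

Lemma s_bot a : s FBot a = 0.
Proof. by rewrite /s /=; lra. Qed.

Lemma s_max p q a : s (FMax p q) a = Num.max (s p a) (s q a).
Proof. by rewrite /s /= max_neg. Qed.

Lemma s_min p q a : s (FMin p q) a = Num.min (s p a) (s q a).
Proof. by []. Qed.

Lemma s_dist p q a : s (FDist p q) a = `|s p a - ratr (sval q)|.
Proof. by rewrite s_max /s /= rmorphB rmorph1 dist_max. Qed.

Lemma s_addc p q a : s (FAddC p q) a = Num.min (s p a + ratr (sval q)) 1.
Proof. by rewrite /s /= addc_min. Qed.

Lemma depth_max p q : depth (FMax p q) = maxn (depth p) (depth q).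
Proof. by []. Qed.

Lemma depth_dist p q : depth (FDist p q) = depth p.
Proof. by rewrite /= maxnn. Qed.

Lemma s_bigmax (T : finType) (F : T -> formula Lambda) a :
  s (\big[FMax/FBot]_(t : T) F t) a = \big[Num.max/0]_(t : T) s (F t) a.
Proof. by apply: (big_morph (fun p => s p a)) => [p q|]; rewrite ?s_max ?s_bot. Qed.

Lemma s_bigmin (T : finType) (F : T -> formula Lambda) a :
  s (\big[(@FMin Lambda)/FTop]_(t : T) F t) a = \big[Num.min/1]_(t : T) s (F t) a.
Proof. by apply: (big_morph (fun p => s p a)) => [p q|]; rewrite ?s_min. Qed.

Lemma depth_bigmax (T : finType) (F : T -> formula Lambda) i :
  (forall t, depth (F t) <= i)%N -> (depth (\big[FMax/FBot]_(t : T) F t) <= i)%N.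
Proof.
move=> h; apply: (big_ind (fun p => depth p <= i)%N) => // p q hp hq.
by rewrite depth_max geq_max hp hq.
Qed.

Lemma depth_bigmin (T : finType) (F : T -> formula Lambda) i :
  (forall t, depth (F t) <= i)%N -> (depth (\big[(@FMin Lambda)/FTop]_(t : T) F t) <= i)%N.
Proof.
move=> h; apply: (big_ind (fun p => depth p <= i)%N) => // p q hp hq.
by rewrite /= geq_max hp hq.
Qed.

End Forms.


Section Big.
Variable R : realType.

Lemma small_inv (e : R) : 0 < e -> exists N : nat, (N.+1%:R)^-1 < e.
Proof.
move=> e0; exists (Num.bound e^-1).
rewrite invf_plt ?posrE ?ltr0n //.
apply: lt_le_trans (archi_boundP _) _; first by rewrite invr_ge0 ltW.
by rewrite ler_nat.
Qed.

Lemma bigmax_term (T : finType) (F : T -> R) t : F t <= \big[Num.max/0]_(i : T) F i.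
Proof.
rewrite unlock /reducebig.
have : t \in index_enum T by rewrite mem_index_enum.
elim: (index_enum T) => //= j r IH; rewrite inE => /orP[/eqP->|/IH h].
  by rewrite le_max lexx.
by rewrite le_max h orbT.
Qed.

Lemma bigmax_le (T : finType) (F : T -> R) b :
  0 <= b -> (forall t, F t <= b) -> \big[Num.max/0]_(i : T) F i <= b.
Proof. by move=> b0 h; apply: (big_ind (fun y => y <= b)) => // y z hy hz; rewrite ge_max hy hz. Qed.

Lemma bigmax_ge0 (T : finType) (F : T -> R) : 0 <= \big[Num.max/0]_(i : T) F i.
Proof. by apply: (big_rec (fun y => 0 <= y)) => // i y _ hy; rewrite le_max hy orbT. Qed.

Lemma bigmin_term (T : finType) (F : T -> R) t : \big[Num.min/1]_(i : T) F i <= F t.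
Proof.
rewrite unlock /reducebig.
have : t \in index_enum T by rewrite mem_index_enum.
elim: (index_enum T) => //= j r IH; rewrite inE => /orP[/eqP->|/IH h].
  by rewrite ge_min lexx.
by rewrite ge_min h orbT.
Qed.

Lemma bigmin_ge (T : finType) (F : T -> R) b :
  b <= 1 -> (forall t, b <= F t) -> b <= \big[Num.min/1]_(i : T) F i.
Proof. by move=> b0 h; apply: (big_ind (fun y => b <= y)) => // y z hy hz; rewrite le_min hy hz. Qed.

End Big.

Section UC.
Variable R : realType.
Variable B : functor.
Variable Lambda : Type.
Variable tau : Lambda -> B (I01 R) -> I01 R.
Hypothesis Htau : tau_unif_continuous tau.
Variable X : Type.

Lemma UC lam (e : R) : 0 < e -> exists2 d : R, 0 < d &
  forall k k' : X -> I01 R, (forall a, `|v01 (k a) - v01 (k' a)| < d) ->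
  forall u, `|v01 (tau lam (Fmap k u)) - v01 (tau lam (Fmap k' u))| < e.
Proof.
move=> e0; apply: contrapT => H.
have H' : forall n : nat, exists p : (X -> I01 R) * (X -> I01 R) * B X,
    (forall a, `|v01 (p.1.1 a) - v01 (p.1.2 a)| < (n.+1%:R)^-1) /\
    e <= `|v01 (tau lam (Fmap p.1.1 p.2)) - v01 (tau lam (Fmap p.1.2 p.2))|.
  move=> n; apply: contrapT => Hn; apply: H; exists (n.+1%:R)^-1.
    by rewrite invr_gt0 ltr0n.
  move=> k k' hk u; rewrite ltNge; apply/negP => he; apply: Hn.
  by exists (k, k', u).
case: (choice H') => f Hf.
pose kk n := (f n).1.1; pose kk' n := (f n).1.2; pose uu n := (f n).2.
pose L : nat * X -> I01 R := fun y => kk y.1 y.2.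
pose M n : nat * X -> I01 R := fun y => if (n <= y.1)%N then kk' y.1 y.2 else kk y.1 y.2.
have cvg : unif_cvg (fun n y => v01 (M n y)) (fun y => v01 (L y)).
  move=> e' e'0; have [N hN] := small_inv e'0; exists N => n hn [j a] /=.
  rewrite /M /L /=; case: ifP => hj; last by rewrite subrr normr0.
  have [h1 _] := Hf j; rewrite distrC; apply: lt_trans (h1 a) _.
  apply: le_lt_trans hN; rewrite lef_pV2 ?posrE ?ltr0n // ler_nat ltnS.
  exact: leq_trans hn hj.
have [N' HN'] := Htau cvg lam e0.
have := HN' N' (leqnn _) (Fmap (fun a => (N', a)) (uu N')).
rewrite -!Fmap_comp.
have -> : (fun a => M N' (N', a)) = kk' N'.
  by apply: funext => a; rewrite /M /= leqnn.
have -> : (fun a => L (N', a)) = kk N' by [].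
have [_ h2] := Hf N'; rewrite distrC ltNge.
by rewrite h2.
Qed.
End UC.


Section Round.
Variable R : realType.

Lemma natS_div (m N : nat) : (m.+1%:R / N%:R : R) = m%:R / N%:R + N%:R^-1.
Proof. by rewrite -addn1 natrD mulrDl mul1r. Qed.

Lemma round (N : nat) (y : R) : (0 < N)%N -> 0 <= y <= 1 ->
  exists j : 'I_N.+1, `|y - j%:R / N%:R| <= N%:R^-1.
Proof.
move=> N0 /andP[y0 y1].
have w0 : 0 < (N%:R : R)^-1 by rewrite invr_gt0 ltr0n.
have ex : exists j, (fun j : nat => y <= j%:R / N%:R) j.
  by exists N; rewrite /= divff ?pnatr_eq0 -?lt0n.
case: (ex_minnP ex) => j hj hmin.
have jN : (j < N.+1)%N by rewrite ltnS hmin // divff ?pnatr_eq0 -?lt0n.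
exists (Ordinal jN) => /=.
move: hj hmin; case: j jN => [|j] jN hj hmin.
  by rewrite mul0r subr0 ger0_norm //; lra.
have hj' : j%:R / N%:R < y.
  by rewrite ltNge; apply/negP => /hmin; rewrite ltnn.
move: hj; rewrite natS_div => hj.
rewrite ler_norml; apply/andP; split; lra.
Qed.
End Round.


Section Approx.
Variable R : realType.
Variable B : functor.
Variable Lambda : finType.
Variable tau : Lambda -> B (I01 R) -> I01 R.
Variable X : Type.
Variable x : X -> B X.

Local Notation s := (s tau x).

Definition Mg (T : finType) (g : T -> formula Lambda) (a b : X) : R :=
  \big[Num.max/0]_(t : T) `|s (g t) a - s (g t) b|.

Definition Dform (T : finType) (g : T -> formula Lambda) N (p : {ffun T -> 'I_N.+1}) :=
  \big[@FMax Lambda/FBot Lambda]_(t : T) FDist (g t) (gridQ (p t)).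

Definition Kform (T : finType) (g : T -> formula Lambda) N
   (c : {ffun {ffun T -> 'I_N.+1} -> 'I_N.+1}) :=
  \big[(@FMin Lambda)/FTop]_(p : {ffun T -> 'I_N.+1}) FAddC (Dform g p) (gridQ (c p)).

Lemma depth_Kform (T : finType) (g : T -> formula Lambda) N c i :
  (forall t, depth (g t) <= i)%N -> (depth (Kform g (N:=N) c) <= i)%N.
Proof.
move=> h; apply: depth_bigmin => p /=.
by apply: depth_bigmax => t; rewrite depth_dist.
Qed.

Lemma approx (T : finType) (g : T -> formula Lambda) (e : R) (N : nat) :
  0 <= e -> (0 < N)%N -> forall h : X -> R, (forall a, 0 <= h a <= 1) ->
  (forall a b, h a - h b <= Mg g a b + e) ->
  exists c, forall a, `|s (Kform g (N:=N) c) a - h a| <= e + 3%:R * N%:R^-1.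
Proof.
move=> e0 N0 h h01 hM.
have w0 : 0 < (N%:R : R)^-1 by rewrite invr_gt0 ltr0n.
pose D a (p : {ffun T -> 'I_N.+1}) := \big[Num.max/0]_(t : T) `|s (g t) a - (p t)%:R / N%:R|.
have sD a p : s (Dform g p) a = D a p.
  by rewrite /Dform s_bigmax; apply: eq_bigr => t _; rewrite s_dist ratr_gridQ.
have D0 a p : 0 <= D a p by apply: bigmax_ge0.
have tri a b p : Mg g a b <= D a p + D b p.
  apply: bigmax_le => [|t]; first by rewrite addr_ge0.
  have := ler_distD ((p t)%:R / N%:R : R) (s (g t) a) (s (g t) b). move=> HH; try move=> _; apply: (le_trans HH).
  rewrite (distrC _ (s (g t) b)); apply: lerD; [apply: (bigmax_term (fun t => `|s (g t) a - (p t)%:R / N%:R|)) | apply: (bigmax_term (fun t => `|s (g t) b - (p t)%:R / N%:R|))].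
have rnd a : exists p : {ffun T -> 'I_N.+1}, D a p <= N%:R^-1.
  have : forall t, exists j : 'I_N.+1, `|s (g t) a - j%:R / N%:R| <= N%:R^-1.
    by move=> t; apply: round => //; apply: s_range.
  case/fin_all_exists => f hf; exists (finfun f).
  by apply: bigmax_le => [|t]; [exact: ltW | rewrite ffunE; idtac].
have cp : forall p : {ffun T -> 'I_N.+1}, exists j : 'I_N.+1,
    (forall a, h a <= j%:R / N%:R + D a p + e) /\
    (forall a0, D a0 p <= N%:R^-1 -> j%:R / N%:R <= h a0 + 2%:R * N%:R^-1).
  move=> p.
  pose P := fun j : nat => `[< forall a, h a <= j%:R / N%:R + D a p + e >].
  have ex : exists j, P j.
    exists N; apply/asboolP => a; rewrite divff ?pnatr_eq0 -?lt0n //.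
    have := h01 a; have := D0 a p; lra.
  case: (ex_minnP ex) => j /asboolP hj hmin.
  have jN : (j < N.+1)%N.
    rewrite ltnS hmin //; apply/asboolP => a; rewrite divff ?pnatr_eq0 -?lt0n //.
    have := h01 a; have := D0 a p; lra.
  exists (Ordinal jN); split => //= a0 ha0.
  move: hj hmin; case: j jN => [|j] jN hj hmin.
    by rewrite mul0r; have := h01 a0; lra.
  rewrite natS_div leNgt; apply/negP => hlt.
  have : (j.+1 <= j)%N; last by rewrite ltnn.
  apply: hmin; apply/asboolP => a.
  have := hM a a0; have := tri a a0 p; lra.
case/fin_all_exists: cp => c0 hc.
exists (finfun c0) => a.
rewrite /Kform s_bigmin.
have hK p : s (FAddC (Dform g p) (gridQ ([ffun p => c0 p] p))) a =
    Num.min (D a p + (c0 p)%:R / N%:R) 1.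
  by rewrite s_addc sD ratr_gridQ ffunE.
have low : h a - e <= \big[Num.min/1]_(p : {ffun T -> 'I_N.+1}) s (FAddC (Dform g p) (gridQ ([ffun p => c0 p] p))) a.
  apply: bigmin_ge => [|p]; first by have := h01 a; lra.
  rewrite hK le_min; have [h1 _] := hc p; have := h1 a; have := h01 a.
  move=> *; apply/andP; split; lra.
have [p0 hp0] := rnd a.
have up := bigmin_term (fun p => s (FAddC (Dform g p) (gridQ ([ffun p => c0 p] p))) a) p0.
move: up; rewrite hK => up.
have [_ h2] := hc p0; have := h2 a hp0 => h3.
have : Num.min (D a p0 + (c0 p0)%:R / N%:R) 1 <= D a p0 + (c0 p0)%:R / N%:R by rewrite ge_min lexx.
move=> hmn; rewrite ler_norml; apply/andP; split; lra.
Qed.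
End Approx.


Section Main.
Variable R : realType.
Variable B : functor.
Variable Lambda : finType.
Variable tau : Lambda -> B (I01 R) -> I01 R.
Variable X : Type.
Variable x : X -> B X.

Local Notation s := (s tau x).
Local Notation Mg := (Mg tau x).

Lemma struct_ind n (M : X -> X -> R) e : (forall a b, 0 <= M a b) -> 0 <= e ->
  (forall lam psi, (depth psi < n)%N -> forall a b,
      `|s (FHeart lam psi) a - s (FHeart lam psi) b| <= M a b + e) ->
  forall psi, (depth psi <= n)%N -> forall a b, `|s psi a - s psi b| <= M a b + e.
Proof.
move=> M0 e0 hH; elim => [|p IH|p IHp q IHq|r p IH|lam p _] /= hd a b.
- by rewrite /s /= subrr normr0 addr_ge0.
- have -> : s (FNeg p) a - s (FNeg p) b = - (s p a - s p b) by rewrite /s /=; lra.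
  by rewrite normrN IH.
- apply: le_trans (min_dist _ _ _ _) _; rewrite ge_max.
  by move: hd; rewrite geq_max => /andP[h1 h2]; rewrite IHp // IHq.
- by apply: le_trans (trunc_dist _ _ _) _; apply: IH.
- by apply: hH.
Qed.

Definition Qprop i := forall e : R, 0 < e -> exists (T : finType) (g : T -> formula Lambda),
  (forall t, depth (g t) <= i)%N /\
  forall psi, (depth psi <= i)%N -> forall a b, `|s psi a - s psi b| <= Mg g a b + e.

Lemma Q0 : Qprop 0.
Proof.
move=> e e0; exists 'I_0, (fun _ => FTop); split => // psi hd a b.
apply: (struct_ind (n := 0)) => //; first by move=> *; apply: bigmax_ge0.
exact: ltW.
Qed.

Lemma TB i : Qprop i -> forall d : R, 0 < d -> exists (T : finType) (f : T -> formula Lambda),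
  (forall t, depth (f t) <= i)%N /\
  forall psi, (depth psi <= i)%N -> exists t, forall a, `|s psi a - s (f t) a| < d.
Proof.
move=> HQ d d0.
have [T [g [hg hQ]]] := HQ (d / 4%:R) (divr_gt0 d0 (ltr0n _ 4)).
have [N hN] := small_inv (divr_gt0 d0 (ltr0n R 8)).
exists {ffun {ffun T -> 'I_N.+2} -> 'I_N.+2}, (fun c => Kform g (N:=N.+1) c).
split => [c|psi hd]; first exact: depth_Kform.
have hM : forall a b, s psi a - s psi b <= Mg g a b + d / 4%:R.
  by move=> a b; apply: le_trans (ler_norm _) (hQ _ hd a b).
have e4 : 0 <= d / 4%:R by rewrite ltW // divr_gt0 // ltr0n.
have [c hc] := @approx R B Lambda tau X x T g (d / 4%:R) N.+1 e4 (ltn0Sn N) (s psi)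
  (fun a => s_range tau x psi a) hM.
exists c => a; rewrite distrC; apply: le_lt_trans (hc a) _.
move: hN; set w := (N.+1%:R)^-1 => hN; lra.
Qed.

Lemma Qstep i : tau_unif_continuous tau -> Qprop i -> Qprop i.+1.
Proof.
move=> Htau HQ e e0.
have e20 : 0 < e / 2%:R by rewrite divr_gt0 // ltr0n.
have : forall lam, exists d : R, 0 < d /\ forall k k' : X -> I01 R,
    (forall a, `|v01 (k a) - v01 (k' a)| < d) ->
    forall u, `|v01 (tau lam (Fmap k u)) - v01 (tau lam (Fmap k' u))| < e / 2%:R.
  by move=> lam; have [d d0 hd] := UC Htau X lam e20; exists d.
case/fin_all_exists => dd hdd.
pose del := \big[Num.min/1]_(lam : Lambda) dd lam.
have del0 : 0 < del.
  apply: (big_ind (fun y => 0 < y)) => //; first by move=> y z hy hz; rewrite lt_min hy hz.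
  by move=> lam _; have [] := hdd lam.
have [T [f [hf hTB]]] := TB HQ del0.
exists (Lambda * T)%type, (fun lt => FHeart lt.1 (f lt.2)); split => [[lam t]|psi hd a b].
  by rewrite /= ltnS.
apply: (struct_ind (n := i.+1)) => //; first by move=> *; apply: bigmax_ge0.
  exact: ltW.
move=> lam p; rewrite ltnS => hp a' b'.
have [t ht] := hTB p hp.
have [_ hU] := hdd lam.
have hU' := hU (sem tau x p) (sem tau x (f t)) (fun a => lt_le_trans (ht a) (bigmin_term dd lam)).
have hm := bigmax_term (fun lt : Lambda * T => `|s (FHeart lt.1 (f lt.2)) a' - s (FHeart lt.1 (f lt.2)) b'|) (lam, t).
rewrite /Mg /=.
move: hm; rewrite /=.
have h1 := hU' (x a'); have h2 := hU' (x b').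
have E1 : s (FHeart lam p) a' = v01 (tau lam (Fmap (sem tau x p) (x a'))) by [].
have E2 : s (FHeart lam p) b' = v01 (tau lam (Fmap (sem tau x p) (x b'))) by [].
have E3 : s (FHeart lam (f t)) a' = v01 (tau lam (Fmap (sem tau x (f t)) (x a'))) by [].
have E4 : s (FHeart lam (f t)) b' = v01 (tau lam (Fmap (sem tau x (f t)) (x b'))) by [].
rewrite E1 E2 E3 E4 => hm.
move: h1 h2 hm.
set A1 := v01 (tau lam (Fmap (sem tau x p) (x a'))).
set A2 := v01 (tau lam (Fmap (sem tau x p) (x b'))).
set G1 := v01 (tau lam (Fmap (sem tau x (f t)) (x a'))).
set G2 := v01 (tau lam (Fmap (sem tau x (f t)) (x b'))).
set MM := \big[Num.max/0]_(i0 : Lambda * T) _.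
move=> h1 h2 hm.
have := ler_distD G1 A1 A2; have := ler_distD G2 G1 A2.
rewrite (distrC G2 A2).
lra.
Qed.

Lemma Qall i : tau_unif_continuous tau -> Qprop i.
Proof. by move=> Htau; elim: i => [|i IH]; [exact: Q0 | exact: Qstep]. Qed.

End Main.

Local Open Scope classical_set_scope.

Theorem propositionV8 (R : realType) (B : functor) (Lambda : finType)
    (tau : Lambda -> B (I01 R) -> I01 R)
    (Htau : tau_unif_continuous tau)
    (X : Type) (x : X -> B X) :
  forall i : nat, approximating tau (S_depth tau x i).
Proof.
move=> i h hne lam z w.
set E := [set _ | _ in _].
apply/ler_addgt0Pr => eps eps0.
have eps2 : (0 < eps / 2%:R)%R by rewrite divr_gt0 // ltr0n.
have [d d0 hd] := UC Htau X lam eps2.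
have [T [g [hg hQ]]] := Qall x i Htau (divr_gt0 d0 (ltr0n R 4)).
have [N hN] := small_inv (divr_gt0 d0 (ltr0n R 8)).
have hM : forall a b, v01 (h a) - v01 (h b) <= Mg tau x g a b + d / 4%:R.
  move=> a b; apply: le_trans (ler_norm _) _; apply: le_trans (hne a b) _.
  apply: ge_sup.
    by exists `|v01 (sem tau x FTop a) - v01 (sem tau x FTop b)|, (sem tau x FTop) => //; exists FTop.
  move=> y [k [phi [hphi ->]] <-]; exact: hQ.
have e4 : (0 <= d / 4%:R)%R by rewrite ltW // divr_gt0 // ltr0n.
have h01 : forall a, (0 <= v01 (h a) <= 1)%R by move=> a; case: (h a).
have [c hc] := @approx R B Lambda tau X x T g (d / 4%:R) N.+1 e4 (ltn0Sn N) (fun a => v01 (h a)) h01 hM.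
pose K := sem tau x (Kform g (N:=N.+1) c).
have hK : forall a, `|v01 (h a) - v01 (K a)| < d.
  move=> a; rewrite distrC; apply: le_lt_trans (hc a) _.
  move: hN; set w' := (N.+1%:R)^-1 => hN; lra.
have hz := hd h K hK z; have hw := hd h K hK w.
have hE : `|v01 (tau lam (Fmap K z)) - v01 (tau lam (Fmap K w))| <= sup E.
  apply: ub_le_sup.
    exists 1; rewrite /ubound /= => y [p _ hy]; rewrite -hy.
    have /andP[u0 u1] := proj2_sig (tau p.2 (Fmap p.1 z)).
    have /andP[v0 v1] := proj2_sig (tau p.2 (Fmap p.1 w)).
    rewrite /v01.
    rewrite ler_norml; apply/andP; split; lra.
  exists (K, lam) => //=; exists (Kform g (N:=N.+1) c); split => //.
  exact: depth_Kform.
move: hz hw hE.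
set A1 := v01 (tau lam (Fmap h z)).
set A2 := v01 (tau lam (Fmap h w)).
set G1 := v01 (tau lam (Fmap K z)).
set G2 := v01 (tau lam (Fmap K w)).
move=> hz hw hE.
have := ler_distD G1 A1 A2; have := ler_distD G2 G1 A2.
rewrite (distrC G2 A2).
lra.
Qed.
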